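(* Let $H$ be a real Hilbert space with inner product $(\cdot,\cdot)$, let $G:H\to H$ be a bounded, self-adjoint, positive definite linear operator (i.e. $(Gv,v)>0$ for $v\neq0$), let $\bar u\in H$, and let $0<\alpha\le\frac12$. Let $(u_j)_{j\ge0}$ be the Mitlar iterates: $[(1-\alpha)G+\alpha I]u_0=\bar u$ and $[(1-\alpha)G+\alpha I](u_j-u_{j-1})=\bar u-Gu_{j-1}$ for $j\ge1$. Define $E_0(v)=\frac12(Gv,v)-(\bar u,v)$ for $v\in H$. Then for every $j\ge0$, $$E_0(u_j)-E_0(u_{j+1})=\Big(\big[(\tfrac12-\alpha)G+\alpha I\big](u_{j+1}-u_j),\,u_{j+1}-u_j\Big)\ge0,$$ with equality only when $u_{j+1}=u_j$. In particular $E_0(u_{j+1})<E_0(u_j)$ unless $u_{j+1}=u_j$. *)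

(* Defs.v *)
From HB Require Import structures.
From mathcomp Require Import all_boot all_order all_algebra.
From mathcomp Require Import all_classical all_reals all_analysis.
Set Implicit Arguments. Unset Strict Implicit. Unset Printing Implicit Defensive.
Import Order.TTheory GRing.Theory Num.Theory.
Local Open Scope ring_scope.

(* A real Hilbert space: a complete normed R-vector space H whose norm comes
   from an inner product ip (bilinear, symmetric, ip v v = |v|^2). *)
Definition is_inner_product (R : realType) (H : normedModType R)
  (ip : H -> H -> R) : Prop :=
  [/\ (forall (a : R) (u v w : H), ip (a *: u + v) w = a * ip u w + ip v w),
      (forall u v : H, ip u v = ip v u) &
      (forall v : H, ip v v = `|v| ^+ 2)].

Definition bounded_op (R : realType) (H : normedModType R) (G : H -> H) : Prop :=
  exists C : R, forall v : H, `|G v| <= C * `|v|.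

Definition self_adjoint (R : realType) (H : normedModType R)
  (ip : H -> H -> R) (G : H -> H) : Prop :=
  forall v w : H, ip (G v) w = ip v (G w).

Definition pos_definite (R : realType) (H : normedModType R)
  (ip : H -> H -> R) (G : H -> H) : Prop :=
  forall v : H, v != 0 -> 0 < ip (G v) v.

Definition mitlar_op (R : realType) (H : normedModType R) (G : H -> H)
  (alpha : R) (v : H) : H := (1 - alpha) *: G v + alpha *: v.

Definition mitlar_iterates (R : realType) (H : normedModType R) (G : H -> H)
  (alpha : R) (ubar : H) (u : nat -> H) : Prop :=
  mitlar_op G alpha (u 0%N) = ubar /\
  forall j : nat, mitlar_op G alpha (u j.+1 - u j) = ubar - G (u j).

Definition E0 (R : realType) (H : normedModType R) (ip : H -> H -> R)
  (G : H -> H) (ubar : H) (v : H) : R := 2^-1 * ip (G v) v - ip ubar v.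

(* Main.v *)
Require Import Defs.
From HB Require Import structures.
From mathcomp Require Import all_boot all_order all_algebra.
From mathcomp Require Import all_classical all_reals all_analysis.
From mathcomp Require Import ring lra.
Import Order.TTheory GRing.Theory Num.Theory.
Local Open Scope ring_scope.

Theorem mainTheorem9 (R : realType) (H : completeNormedModType R)
  (ip : H -> H -> R) (G : {linear H -> H}) (ubar : H) (alpha : R)
  (u : nat -> H) :
  is_inner_product ip ->
  bounded_op G -> self_adjoint ip G -> pos_definite ip G ->
  0 < alpha -> alpha <= 2^-1 ->
  mitlar_iterates G alpha ubar u ->
  forall j : nat,
    let d := u j.+1 - u j in
    [/\ E0 ip G ubar (u j) - E0 ip G ubar (u j.+1)
          = ip ((2^-1 - alpha) *: G d + alpha *: d) d,
        0 <= ip ((2^-1 - alpha) *: G d + alpha *: d) d,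
        (ip ((2^-1 - alpha) *: G d + alpha *: d) d = 0 -> u j.+1 = u j) &
        (u j.+1 != u j -> E0 ip G ubar (u j.+1) < E0 ip G ubar (u j))].
Proof.
move=> [ipL ipS ipN] _ sa pd a0 ah [_ it] j d.
have ip0 : forall w, ip 0 w = 0.
  move=> w; have := ipL 1 0 0 w; rewrite scale1r addr0 mul1r => h.
  by apply/eqP; rewrite -(subrr (ip 0 w)); rewrite [X in _ == X - _]h addrK.
have ipD : forall x y w, ip (x + y) w = ip x w + ip y w.
  by move=> x y w; have := ipL 1 x y w; rewrite scale1r mul1r.
have ipZ : forall a x w, ip (a *: x) w = a * ip x w.
  by move=> a x w; have := ipL a x 0 w; rewrite addr0 ip0 addr0.
have ipB : forall x y w, ip (x - y) w = ip x w - ip y w.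
  by move=> x y w; rewrite ipD -scaleN1r ipZ mulN1r.
have ipDr : forall x y w, ip w (x + y) = ip w x + ip w y.
  by move=> x y w; rewrite ipS ipD ipS (ipS y).
have ud : u j.+1 = u j + d by rewrite /d addrC subrK.
have key := congr1 (fun x => ip x d) (it j).
move: key; rewrite /= -/d /mitlar_op.
rewrite ipD !ipZ (ipB ubar) => key.
clearbody d.
have sym : ip (G d) (u j) = ip (G (u j)) d by rewrite sa ipS.
have Ga : 0 <= ip (G d) d.
  have [->|dn] := eqVneq d 0; first by rewrite linear0 ip0.
  exact/ltW/pd.
have nd : ip d d = `|d| ^+ 2 by [].
have nd0 : 0 <= ip d d by rewrite nd sqr_ge0.
have eq1 : E0 ip G ubar (u j) - E0 ip G ubar (u j.+1)
          = ip ((2^-1 - alpha) *: G d + alpha *: d) d.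
  rewrite /E0 ud (linearD G) !ipD !ipDr !ipZ ?ipD ?ipZ.
  have ke : ip ubar d = (1-alpha)*ip (G d) d + alpha*ip d d + ip (G (u j)) d.
    by rewrite key subrK.
  rewrite sym ke; move: (ip (G d) d) (ip d d) (ip (G (u j)) d) (ip (G (u j)) (u j)) (ip ubar (u j)) => a b c e f.
  by rewrite mulrBl mul1r; field; rewrite ?pnatr_eq0.
have posq : 0 <= ip ((2^-1 - alpha) *: G d + alpha *: d) d.
  rewrite ipD !ipZ; apply: addr_ge0; apply: mulr_ge0 => //; [lra|exact: ltW].
have z : ip ((2^-1 - alpha) *: G d + alpha *: d) d = 0 -> u j.+1 = u j.
  rewrite ipD !ipZ => h.
  have : alpha * ip d d = 0.
    apply/eqP; rewrite eq_le mulr_ge0 ?(ltW a0) // andbT.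
    have : 0 <= (2^-1 - alpha) * ip (G d) d by apply: mulr_ge0 => //; lra.
    by move/eqP: h; rewrite addr_eq0 => /eqP ->; rewrite oppr_ge0.
  move/eqP; rewrite mulf_eq0 (gt_eqF a0) /= nd sqrf_eq0 normr_eq0 => /eqP d0.
  by rewrite ud d0 addr0.
split; [exact: eq1|exact: posq|exact: z|move=> ne].
have : 0 < ip ((2^-1 - alpha) *: G d + alpha *: d) d.
  rewrite lt_neqAle posq andbT eq_sym; apply/eqP => /z; exact/eqP.
by move=> hp; rewrite -subr_gt0 eq1.
Qed.
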